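(* Let $e$ be a series-rational expression. One can obtain a fork-acyclic and finite pomset automaton $A$ with a state $q$ such that $L_A(q)=[\![e]\!]$.
   Context: Fix a finite alphabet $\Sigma$. Pomsets are isomorphism classes of finite labelled posets over $\Sigma$; $1$ is the empty pomset; sequential composition $U\cdot V$ is the disjoint union with all elements of $U$ below all elements of $V$; parallel composition $U\parallel V$ is the disjoint union of orders. $\mathsf{SP}(\Sigma)$ is the smallest set containing $1$ and the one-element pomsets $a\in\Sigma$ closed under $\cdot,\parallel$. These lift pointwise to sets of pomsets, and $L^*=\bigcup_n L^n$ with $L^0=\{1\}$, $L^{n+1}=L\cdot L^n$. Series-rational expressions are generated by $e,f::=0\mid 1\mid a\in\Sigma\mid e+f\mid e\cdot f\mid e\parallel f\mid e^*$, with semantics $[\![0]\!]=\emptyset$, $[\![1]\!]=\{1\}$, $[\![a]\!]=\{a\}$, $[\![e+f]\!]=[\![e]\!]\cup[\![f]\!]$, $[\![e\cdot f]\!]=[\![e]\!]\cdot[\![f]\!]$, $[\![e\parallel f]\!]=[\![e]\!]\parallel[\![f]\!]$, $[\![e^*]\!]=[\![e]\!]^*$. A pomset automaton is $A=\langle Q,F,\delta,\gamma\rangle$ with $F\subseteq Q$, $\delta:Q\times\Sigma\to2^Q$, $\gamma:Q\times\mathbb{M}(Q)\to2^Q$ ($\mathbb{M}(Q)$ finite multisets over $Q$), each $q$ having finitely many $\phi$ with $\gamma(q,\phi)\ne\emptyset$; it is finite if $Q$ is finite. The run relation $\to_A$ is the smallest relation with: $q\xrightarrow{1}_A q$; $q\xrightarrow{a}_A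 q'$ if $q'\in\delta(q,a)$; $q\xrightarrow{U\cdot V}_A q'$ if $q\xrightarrow{U}_A q''\xrightarrow{V}_A q'$; $q\xrightarrow{U_1\parallel\cdots\parallel U_n}_A q'$ if $q'\in\gamma(q,\{\!|q_1,\dots,q_n|\!\})$ and each $q_i\xrightarrow{U_i}_A q_i'$ for some $q_i'\in F$. $L_A(q)=\{U\mid\exists q'\in F.\ q\xrightarrow{U}_A q'\}$. The support relation $\preceq_A$ is the smallest preorder with $q'\preceq_A q$ whenever $q'\in\delta(q,a)$, or $q'\in\gamma(q,\phi)$, or $q'\in\phi$ with $\gamma(q,\phi)\ne\emptyset$; $A$ is fork-acyclic if $r\in\phi$ and $\gamma(q,\phi)\ne\emptyset$ imply $q\not\preceq_A r$. *)

(* Defs.v *)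
From HB Require Import structures.
From mathcomp Require Import all_boot.
From mathcomp Require Import finmap multiset.
From Stdlib Require Import Relations.
Set Implicit Arguments. Unset Strict Implicit. Unset Printing Implicit Defensive.
Local Open Scope fset_scope.
Local Open Scope mset_scope.

Section Pomsets.
Variable Sigma : finType.

(* A finite labelled relational structure on {0,..,n-1}; a labelled poset
   when [is_lposet] holds.  Pomsets are such structures up to [liso]. *)
Record lpo := Lpo { lsize : nat; lle : rel 'I_lsize; llab : 'I_lsize -> Sigma }.
Arguments lle : clear implicits.
Arguments llab : clear implicits.

Definition is_lposet (U : lpo) : Prop :=
  [/\ forall x, lle U x x,
      forall x y, lle U x y -> lle U y x -> x = y
    & forall x y z, lle U x y -> lle U y z -> lle U x z].

Definition liso (U V : lpo) : Prop :=
  exists f : 'I_(lsize U) -> 'I_(lsize V),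
    [/\ bijective f,
        forall x y, lle U x y = lle V (f x) (f y)
      & forall x, llab V (f x) = llab U x].

Definition lempty : lpo := @Lpo 0 (fun _ _ => true) (fun x => match x with Ordinal _ h => False_rect _ (notF h) end).

Definition latom (a : Sigma) : lpo := @Lpo 1 (fun _ _ => true) (fun _ => a).

Definition lseq (U V : lpo) : lpo :=
  @Lpo (lsize U + lsize V)
    (fun x y => match split x, split y with
                | inl a, inl b => lle U a b
                | inr a, inr b => lle V a b
                | inl _, inr _ => true
                | inr _, inl _ => false end)
    (fun x => match split x with inl a => llab U a | inr b => llab V b end).

Definition lpar (U V : lpo) : lpo :=
  @Lpo (lsize U + lsize V)
    (fun x y => match split x, split y with
                | inl a, inl b => lle U a b
                | inr a, inr b => lle V a b
                | _, _ => false end)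
    (fun x => match split x with inl a => llab U a | inr b => llab V b end).

Fixpoint lparl (Us : seq lpo) : lpo :=
  match Us with [::] => lempty | U :: Us' => lpar U (lparl Us') end.

Definition lang := lpo -> Prop.

Definition lang_seq (L M : lang) : lang :=
  fun W => exists U V, [/\ L U, M V & liso W (lseq U V)].
Definition lang_par (L M : lang) : lang :=
  fun W => exists U V, [/\ L U, M V & liso W (lpar U V)].
Definition lang_one : lang := fun W => liso W lempty.
Fixpoint lang_pow (L : lang) (n : nat) : lang :=
  match n with 0 => lang_one | n'.+1 => lang_seq L (lang_pow L n') end.
Definition lang_star (L : lang) : lang := fun W => exists n, lang_pow L n W.

Inductive srexpr : Type :=
  | sr0 | sr1 | srlit of Sigma
  | srplus of srexpr & srexpr
  | srseq of srexpr & srexpr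
  | srpar of srexpr & srexpr
  | srstar of srexpr.

Fixpoint sem (e : srexpr) : lang :=
  match e with
  | sr0 => fun _ => False
  | sr1 => lang_one
  | srlit a => fun W => liso W (latom a)
  | srplus e f => fun W => sem e W \/ sem f W
  | srseq e f => lang_seq (sem e) (sem f)
  | srpar e f => lang_par (sem e) (sem f)
  | srstar e => lang_star (sem e)
  end.

Record pa (Q : choiceType) := PA {
  pa_final : Q -> Prop;
  pa_delta : Q -> Sigma -> Q -> Prop;
  pa_gamma : Q -> {mset Q}%mset -> Q -> Prop;
  pa_gamma_fin : forall q, exists s : seq {mset Q}%mset,
      forall phi, (exists q', pa_gamma q phi q') -> phi \in s
}.

Section Runs.
Variables (Q : choiceType) (A : pa Q).

Inductive run : Q -> lpo -> Q -> Prop :=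
  | run_one q W : liso W lempty -> run q W q
  | run_atom q a q' W : pa_delta A q a q' -> liso W (latom a) -> run q W q'
  | run_seq q q'' q' U V W :
      run q U q'' -> run q'' V q' -> liso W (lseq U V) -> run q W q'
  | run_par q q' (qs qfs : seq Q) (Us : seq lpo) W :
      size Us = size qs -> size qfs = size qs ->
      (forall qf, qf \in qfs -> pa_final A qf) ->
      (forall i, i < size qs -> run (nth q qs i) (nth lempty Us i) (nth q qfs i)) ->
      pa_gamma A q (seq_mset qs) q' ->
      liso W (lparl Us) -> run q W q'.

Definition pa_lang (q : Q) : lang :=
  fun U => exists q', pa_final A q' /\ run q U q'.

Definition support_step (q' q : Q) : Prop :=
  (exists a, pa_delta A q a q') \/
  (exists phi, pa_gamma A q phi q') \/
  (exists phi, q' \in phi /\ exists q'', pa_gamma A q phi q'').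

Definition support (q' q : Q) : Prop := clos_refl_trans Q support_step q' q.

Definition fork_acyclic : Prop :=
  forall q phi r, r \in phi -> (exists q'', pa_gamma A q phi q'') -> ~ support q r.

End Runs.
End Pomsets.

(* Main.v *)
Require Import Defs.
From mathcomp Require Import all_boot.
From mathcomp Require Import finmap multiset.
From Stdlib Require Import Relations.
From Stdlib Require List.
Set Implicit Arguments. Unset Strict Implicit. Unset Printing Implicit Defensive.

Section Iso.
Variable Sigma : finType.
Notation lpo := (lpo Sigma).

Lemma liso_intro (U V : lpo) (f : 'I_(lsize U) -> 'I_(lsize V)) g :
  cancel f g -> cancel g f -> (forall x y, lle x y = lle (f x) (f y)) ->
  (forall x, llab (f x) = llab x) -> liso U V.
Proof. move=> fK gK H1 H2; exists f; split => //; exact: Bijective fK gK. Qed.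

Lemma liso_refl (U : lpo) : liso U U.
Proof. by apply: (@liso_intro U U id id). Qed.

Lemma liso_sym (U V : lpo) : liso U V -> liso V U.
Proof.
case=> f [[g fK gK] H1 H2]; apply: (liso_intro gK fK).
  by move=> x y; rewrite H1 !gK.
by move=> x; rewrite -H2 gK.
Qed.

Lemma liso_trans (U V W : lpo) : liso U V -> liso V W -> liso U W.
Proof.
case=> f [[g fK gK] H1 H2]; case=> f' [[g' fK' gK'] H1' H2'].
apply: (@liso_intro U W (f' \o f) (g \o g')).
- by move=> x /=; rewrite fK' fK.
- by move=> x /=; rewrite gK gK'.
- by move=> x y /=; rewrite H1 H1'.
- by move=> x /=; rewrite H2' H2.
Qed.

Definition ord0_elim T (a : 'I_0) : T :=
  match a with Ordinal _ h => False_rect _ (notF h) end.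

Lemma split_lshift m n (a : 'I_m) : split (lshift n a) = inl a.
Proof. exact: (unsplitK (inl a)). Qed.
Lemma split_rshift m n (a : 'I_n) : split (rshift m a) = inr a.
Proof. exact: (unsplitK (inr a)). Qed.

Ltac splitsimp := repeat match goal with
  | |- context [split (@lshift ?m ?n ?a)] => rewrite (@split_lshift m n a)
  | |- context [split (@rshift ?m ?n ?a)] => rewrite (@split_rshift m n a) end.

Lemma lseq_congr (U U' V V' : lpo) : liso U U' -> liso V V' -> liso (lseq U V) (lseq U' V').
Proof.
case=> f [[g fK gK] H1 H2]; case=> f' [[g' fK' gK'] H1' H2'].
pose F (x : 'I_(lsize U + lsize V)) : 'I_(lsize U' + lsize V') :=
  unsplit (match split x with inl a => inl (f a) | inr c => inr (f' c) end).
pose G (x : 'I_(lsize U' + lsize V')) : 'I_(lsize U + lsize V) :=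
  unsplit (match split x with inl a => inl (g a) | inr c => inr (g' c) end).
apply: (@liso_intro (lseq U V) (lseq U' V') F G).
- move=> x; rewrite /F /G unsplitK -[RHS]splitK.
  by case: (split x) => a /=; rewrite ?fK ?fK'.
- move=> x; rewrite /F /G unsplitK -[RHS]splitK.
  by case: (split x) => a /=; rewrite ?gK ?gK'.
- move=> x y; rewrite /F /= !unsplitK.
  by case: (split x) => a; case: (split y) => b.
- move=> x; rewrite /F /= !unsplitK.
  by case: (split x) => a.
Qed.

Lemma lpar_congr (U U' V V' : lpo) : liso U U' -> liso V V' -> liso (lpar U V) (lpar U' V').
Proof.
case=> f [[g fK gK] H1 H2]; case=> f' [[g' fK' gK'] H1' H2'].
pose F (x : 'I_(lsize U + lsize V)) : 'I_(lsize U' + lsize V') :=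
  unsplit (match split x with inl a => inl (f a) | inr c => inr (f' c) end).
pose G (x : 'I_(lsize U' + lsize V')) : 'I_(lsize U + lsize V) :=
  unsplit (match split x with inl a => inl (g a) | inr c => inr (g' c) end).
apply: (@liso_intro (lpar U V) (lpar U' V') F G).
- move=> x; rewrite /F /G unsplitK -[RHS]splitK.
  by case: (split x) => a /=; rewrite ?fK ?fK'.
- move=> x; rewrite /F /G unsplitK -[RHS]splitK.
  by case: (split x) => a /=; rewrite ?gK ?gK'.
- move=> x y; rewrite /F /= !unsplitK.
  by case: (split x) => a; case: (split y) => b.
- move=> x; rewrite /F /= !unsplitK.
  by case: (split x) => a.
Qed.

Lemma lseq_unitl (V : lpo) : liso (lseq (lempty Sigma) V) V.
Proof.
pose F (x : 'I_(0 + lsize V)) : 'I_(lsize V) :=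
  match split x with inl a => ord0_elim _ a | inr c => c end.
pose G (c : 'I_(lsize V)) : 'I_(0 + lsize V) := rshift 0 c.
apply: (@liso_intro (lseq (lempty Sigma) V) V F G).
- move=> x; rewrite /F /G -[RHS]splitK.
  by case: (split x) => a //; case: a.
- by move=> c; rewrite /F /G -/(unsplit (inr c)) unsplitK.
- move=> x y; rewrite /F /=.
  by case: (split x) => a; case: (split y) => b //; try case: a; try case: b.
- move=> x; rewrite /F /=.
  by case: (split x) => a //; case: a.
Qed.

Lemma lseq_unitr (U : lpo) : liso (lseq U (lempty Sigma)) U.
Proof.
pose F (x : 'I_(lsize U + 0)) : 'I_(lsize U) :=
  match split x with inl a => a | inr c => ord0_elim _ c end.
pose G (c : 'I_(lsize U)) : 'I_(lsize U + 0) := lshift 0 c.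
apply: (@liso_intro (lseq U (lempty Sigma)) U F G).
- move=> x; rewrite /F /G -[RHS]splitK.
  by case: (split x) => a //; case: a.
- by move=> c; rewrite /F /G -/(unsplit (inl c)) unsplitK.
- move=> x y; rewrite /F /=.
  by case: (split x) => a; case: (split y) => b //; try case: a; try case: b.
- move=> x; rewrite /F /=.
  by case: (split x) => a //; case: a.
Qed.

Lemma lpar_unitr (U : lpo) : liso (lpar U (lempty Sigma)) U.
Proof.
pose F (x : 'I_(lsize U + 0)) : 'I_(lsize U) :=
  match split x with inl a => a | inr c => ord0_elim _ c end.
pose G (c : 'I_(lsize U)) : 'I_(lsize U + 0) := lshift 0 c.
apply: (@liso_intro (lpar U (lempty Sigma)) U F G).
- move=> x; rewrite /F /G -[RHS]splitK.
  by case: (split x) => a //; case: a.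
- by move=> c; rewrite /F /G -/(unsplit (inl c)) unsplitK.
- move=> x y; rewrite /F /=.
  by case: (split x) => a; case: (split y) => b //; try case: a; try case: b.
- move=> x; rewrite /F /=.
  by case: (split x) => a //; case: a.
Qed.

Lemma lpar_comm (U V : lpo) : liso (lpar U V) (lpar V U).
Proof.
pose F (x : 'I_(lsize U + lsize V)) : 'I_(lsize V + lsize U) :=
  unsplit (match split x with inl a => inr a | inr c => inl c end).
pose G (x : 'I_(lsize V + lsize U)) : 'I_(lsize U + lsize V) :=
  unsplit (match split x with inl a => inr a | inr c => inl c end).
apply: (@liso_intro (lpar U V) (lpar V U) F G).
- move=> x; rewrite /F /G unsplitK -[RHS]splitK.
  by case: (split x) => a.
- move=> x; rewrite /F /G unsplitK -[RHS]splitK.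
  by case: (split x) => a.
- move=> x y; rewrite /F /= !unsplitK.
  by case: (split x) => a; case: (split y) => b.
- move=> x; rewrite /F /= !unsplitK.
  by case: (split x) => a.
Qed.

Lemma lseq_assoc (U V M : lpo) : liso (lseq (lseq U V) M) (lseq U (lseq V M)).
Proof.
pose F (x : 'I_(lsize U + lsize V + lsize M)) : 'I_(lsize U + (lsize V + lsize M)) :=
  match split x with
  | inl y => match split y with inl u => unsplit (inl u)
             | inr v => unsplit (inr (unsplit (inl v))) end
  | inr m => unsplit (inr (unsplit (inr m))) end.
pose G (x : 'I_(lsize U + (lsize V + lsize M))) : 'I_(lsize U + lsize V + lsize M) :=
  match split x with
  | inl u => unsplit (inl (unsplit (inl u)))
  | inr y => match split y with inl v => unsplit (inl (unsplit (inr v)))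
             | inr m => unsplit (inr m) end end.
apply: (@liso_intro (lseq (lseq U V) M) (lseq U (lseq V M)) F G).
- move=> x; rewrite /F /G -[RHS]splitK.
  case: (split x) => [y|m]; last by rewrite !unsplitK.
  rewrite -[y in RHS]splitK.
  by case: (split y) => a; rewrite !unsplitK.
- move=> x; rewrite /F /G -[RHS]splitK.
  case: (split x) => [u|y]; first by rewrite !unsplitK.
  rewrite -[y in RHS]splitK.
  by case: (split y) => a; rewrite !unsplitK.
- move=> x y; rewrite /F /=.
  case: (split x) => [x1|x1]; [case: (split x1) => x2|];
  (case: (split y) => [y1|y1]; [case: (split y1) => y2|]); by splitsimp.
- move=> x; rewrite /F /=.
  by case: (split x) => [x1|x1]; [case: (split x1) => x2|]; splitsimp.
Qed.

End Iso.

Section Sem.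
Variable Sigma : finType.
Notation lpo := (lpo Sigma).
Notation srexpr := (srexpr Sigma).

Lemma lang_pow_iso (L : lang Sigma) n (W U : lpo) : liso W U -> lang_pow L n U -> lang_pow L n W.
Proof.
case: n => [|n] /= H.
  by move=> H1; apply: liso_trans H H1.
by case=> [X [Y [H1 H2 H3]]]; exists X, Y; split => //; apply: liso_trans H H3.
Qed.

Lemma sem_iso (x : srexpr) (W U : lpo) : liso W U -> sem x U -> sem x W.
Proof.
elim: x W U => [| |a|a IHa b IHb|a IHa b IHb|a IHa b IHb|a IHa] W U H //=.
- by move=> H1; apply: liso_trans H H1.
- by move=> H1; apply: liso_trans H H1.
- by case=> H1; [left; apply: IHa H H1|right; apply: IHb H H1].
- by case=> [X [Y [H1 H2 H3]]]; exists X, Y; split => //; apply: liso_trans H H3.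
- by case=> [X [Y [H1 H2 H3]]]; exists X, Y; split => //; apply: liso_trans H H3.
- by case=> n Hn; exists n; apply: lang_pow_iso H Hn.
Qed.

Lemma lang_pow_cat (L : lang Sigma) n m (U V W : lpo) :
  lang_pow L n U -> lang_pow L m V -> liso W (lseq U V) -> lang_pow L (n + m) W.
Proof.
elim: n U V W => [|n IH] U V W /=.
  move=> HU HV HW; apply: lang_pow_iso HV.
  apply: liso_trans HW _; apply: liso_trans (lseq_unitl V).
  by apply: lseq_congr HU (liso_refl _).
case=> [X [Y [HX HY HU]]] HV HW.
exists X, (lseq Y V); split => //.
  by apply: IH HY HV (liso_refl _).
apply: liso_trans HW _; apply: liso_trans (lseq_assoc X Y V).
by apply: lseq_congr HU (liso_refl _).
Qed.

Lemma compl1 (y : srexpr) (U V W : lpo) :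
  sem (sr1 Sigma) U -> sem y V -> liso W (lseq U V) -> sem y W.
Proof.
move=> /= HU HV HW; apply: sem_iso HV.
apply: liso_trans HW _; apply: liso_trans (lseq_unitl V).
by apply: lseq_congr HU (liso_refl _).
Qed.

Lemma compr1 (y : srexpr) (U V W : lpo) :
  sem y U -> sem (sr1 Sigma) V -> liso W (lseq U V) -> sem y W.
Proof.
move=> HU /= HV HW; apply: sem_iso HU.
apply: liso_trans HW _; apply: liso_trans (lseq_unitr U).
by apply: lseq_congr (liso_refl _) HV.
Qed.

Lemma comp0l (P : Prop) (U : lpo) : sem (sr0 Sigma) U -> P.
Proof. by []. Qed.
Lemma comp0r (P : Prop) (y : srexpr) (U V : lpo) : sem y U -> sem (sr0 Sigma) V -> P.
Proof. by []. Qed.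

Lemma compstar (a : srexpr) (U V W : lpo) :
  sem (srstar a) U -> sem (srstar a) V -> liso W (lseq U V) -> sem (srstar a) W.
Proof.
move=> [n Hn] [m Hm] HW; exists (n + m); exact: lang_pow_cat Hn Hm HW.
Qed.

Lemma compseq (a b : srexpr) (U V W : lpo) :
  sem a U -> sem b V -> liso W (lseq U V) -> sem (srseq a b) W.
Proof. by move=> HU HV HW; exists U, V. Qed.

Definition Lspec (x : srexpr) (i j : nat) : srexpr :=
  match x, i, j with
  | srstar _, 0, 0 => x
  | _, _, _ =>
    if i == j then sr1 Sigma else
    match x, i, j with
    | srlit _, 0, 2 | srplus _ _, 0, 2 | srpar _ _, 0, 2 | srseq _ _, 0, 2 => x
    | srseq a _, 0, 1 => a
    | srseq _ b, 1, 2 => b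
    | _, _, _ => sr0 Sigma
    end
  end.

Lemma Lspec_comp x i j k (U V W : lpo) : i < 3 -> j < 3 -> k < 3 ->
  sem (Lspec x i j) U -> sem (Lspec x j k) V -> liso W (lseq U V) ->
  sem (Lspec x i k) W.
Proof.
case: i => [|[|[|i]]] //; case: j => [|[|[|j]]] //; case: k => [|[|[|k]]] // _ _ _;
case: x => [| |?|? ?|? ?|? ?|?]; cbn -[sem];
first [exact: comp0l | exact: comp0r | exact: compl1 | exact: compr1
      | exact: compstar | exact: compseq].
Qed.

End Sem.

Section Aut.
Variable Sigma : finType.
Notation lpo := (lpo Sigma).
Notation srexpr := (srexpr Sigma).

Fixpoint subterms (x : srexpr) : seq srexpr :=
  x :: match x with
       | srplus a b | srseq a b | srpar a b => subterms a ++ subterms b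
       | srstar a => subterms a
       | _ => [::] end.

Fixpoint esize (x : srexpr) : nat :=
  match x with
  | srplus a b | srseq a b | srpar a b => (esize a + esize b).+1
  | srstar a => (esize a).+1
  | _ => 0 end.

Lemma subterms_trans x y z : List.In y (subterms x) -> List.In z (subterms y) ->
  List.In z (subterms x).
Proof.
elim: x => [| |a|a IHa b IHb|a IHa b IHb|a IHa b IHb|a IHa] /=;
  try (by case=> // <-).
all: try (case=> [<- //|H Hz]; right; apply: List.in_or_app;
  case: (List.in_app_or _ _ _ H) => H1; [left; exact: IHa H1 Hz|right; exact: IHb H1 Hz]).
by case=> [<- //|H Hz]; right; exact: IHa H Hz.
Qed.

Lemma In_nth (y : srexpr) s : List.In y s -> exists i : 'I_(size s), nth (sr0 Sigma) s i = y.
Proof.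
elim: s => [|x s IH] //= [->|H]; first by exists ord0.
have [i Hi] := IH H; exists (lift ord0 i) => /=. by [].
Qed.

Lemma nth_In (s : seq srexpr) (i : 'I_(size s)) : List.In (nth (sr0 Sigma) s i) s.
Proof.
case: i => i /=; elim: s i => [|x s IH] [|i] //=; first by left.
by move=> H; right; apply: IH.
Qed.

Variable e : srexpr.
Definition sts := subterms e.
Definition N := size sts.
Definition Q : finType := ('I_N * 'I_3)%type.
Definition ex (q : Q) : srexpr := nth (sr0 Sigma) sts q.1.
Definition tg (q : Q) : nat := q.2.

Lemma ex_sub (q : Q) a : List.In a (subterms (ex q)) -> exists c : Q, ex c = a /\ tg c = 0.
Proof.
move=> H.
have H2 : List.In a sts by apply: subterms_trans (nth_In q.1) H.
have [i Hi] := In_nth H2.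
by exists (i, ord0).
Qed.

Definition fin (q : Q) : Prop :=
  match ex q with
  | sr0 => False
  | sr1 | srstar _ => tg q = 0
  | _ => tg q = 2 end.

Definition del (q : Q) (a : Sigma) (q' : Q) : Prop :=
  q'.1 = q.1 /\ ex q = srlit a /\ tg q = 0 /\ tg q' = 2.

Definition gam (q : Q) (phi : {mset Q}%mset) (q' : Q) : Prop :=
  q'.1 = q.1 /\ exists c : Q, tg c = 0 /\
  match ex q with
  | srplus a b => (ex c = a \/ ex c = b) /\ phi = seq_mset [:: c] /\ tg q = 0 /\ tg q' = 2
  | srseq a b => phi = seq_mset [:: c] /\
      ((ex c = a /\ tg q = 0 /\ tg q' = 1) \/ (ex c = b /\ tg q = 1 /\ tg q' = 2))
  | srpar a b => exists d : Q, tg d = 0 /\ ex c = a /\ ex d = b /\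
      phi = seq_mset [:: c; d] /\ tg q = 0 /\ tg q' = 2
  | srstar a => ex c = a /\ phi = seq_mset [:: c] /\ tg q = 0 /\ tg q' = 0
  | _ => False end.

Lemma gam_shape q phi q' : gam q phi q' ->
  (exists c, phi = seq_mset [:: c]) \/ (exists c d, phi = seq_mset [:: c; d]).
Proof.
case=> _ [c [_]]; case: (ex q) => //.
- by move=> a b [_ [-> _]]; left; exists c.
- by move=> a b [-> _]; left; exists c.
- by move=> a b [d [_ [_ [_ [-> _]]]]]; right; exists c, d.
- by move=> a [_ [-> _]]; left; exists c.
Qed.

Lemma gam_fin q : exists s : seq {mset Q}%mset,
  forall phi, (exists q', gam q phi q') -> phi \in s.
Proof.
exists ([seq seq_mset [:: c] | c <- enum Q] ++
        [seq seq_mset [:: c; d] | c <- enum Q, d <- enum Q]).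
move=> phi [q' /gam_shape [[c ->]|[c [d ->]]]]; rewrite mem_cat; apply/orP.
  by left; apply: map_f; rewrite mem_enum.
by right; apply: (allpairs_f (fun c d => seq_mset [:: c; d])); rewrite mem_enum.
Qed.

Definition A : pa Sigma Q := @PA Sigma Q fin del gam gam_fin.

Lemma ex_eq (q q' : Q) : q'.1 = q.1 -> ex q' = ex q.
Proof. by rewrite /ex => ->. Qed.

Lemma tg_lt (q : Q) : tg q < 3.
Proof. exact: ltn_ord. Qed.

Lemma Lspec_diag x i (W : lpo) : sem (sr1 Sigma) W -> sem (Lspec x i i) W.
Proof.
move=> H; case: x => [| |a|a b|a b|a b|a]; case: i => [|i] //=; rewrite ?eqxx //.
by exists 0.
Qed.

Lemma final_sem (q : Q) (W : lpo) : fin q -> sem (Lspec (ex q) 0 (tg q)) W -> sem (ex q) W.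
Proof.
rewrite /fin; case: (ex q) => [| |a|a b|a b|a b|a] //= ->; by [].
Qed.

Lemma perm1 (s : seq Q) c : perm_eq s [:: c] -> s = [:: c].
Proof. exact: perm_small_eq. Qed.

Lemma perm2 (s : seq Q) c d : perm_eq s [:: c; d] -> s = [:: c; d] \/ s = [:: d; c].
Proof.
move=> H; have := perm_size H; case: s H => [|x [|y [|? ?]]] // H _.
have := perm_mem H x; rewrite !inE eqxx /= => /esym/orP[/eqP Ex|/eqP Ex]; subst x.
  by left; congr (_ :: _); apply: perm_small_eq => //; rewrite -(perm_cons c).
right; congr (_ :: _); apply: perm_small_eq => //; rewrite -(perm_cons d).
by apply: (perm_trans H); rewrite (perm_catC [:: c] [:: d]).
Qed.

Lemma sound (q : Q) (W : lpo) (q' : Q) : run A q W q' ->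
  q'.1 = q.1 /\ sem (Lspec (ex q) (tg q) (tg q')) W.
Proof.
elim=> {q W q'}.
- by move=> q W H; split => //; apply: Lspec_diag.
- move=> q a q' W [E1 [E2 [E3 E4]]] H; split => //.
  by rewrite E2 E3 E4.
- move=> q q'' q' U V W _ [E1 H1] _ [E2 H2] HW; split; first by rewrite E2.
  rewrite (ex_eq E1) in H2.
  exact: Lspec_comp (tg_lt _) (tg_lt _) (tg_lt _) H1 H2 HW.
move=> q q' qs qfs Us W HsU HsF Hfin _ IH [E Hg] HW; split => //.
have child : forall i, i < size qs -> tg (nth q qs i) = 0 ->
    sem (ex (nth q qs i)) (nth (lempty Sigma) Us i).
  move=> i Hi Ht; have [E' H'] := IH i Hi.
  rewrite -(ex_eq E'); apply: final_sem.
    by apply: Hfin; rewrite mem_nth // HsF.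
  by rewrite (ex_eq E') -Ht.
clear IH Hfin.
case: Hg => c [Hc]; case Ex: (ex q) => [| |a|a b|a b|a b|a] //.
- case=> Hca [/eq_seq_msetP/perm1 Eqs [Et Et']]; subst qs.
  case: Us HsU HW child => [|U [|? ?]] // _ HW child.
  have := child 0 isT Hc => /= HU.
  rewrite Et Et' /=.
  have HW' : liso W U by apply: liso_trans HW (lpar_unitr U).
  by case: Hca => <-; [left|right]; apply: sem_iso HW' HU.
- case=> [/eq_seq_msetP/perm1 Eqs H]; subst qs.
  case: Us HsU HW child => [|U [|? ?]] // _ HW child.
  have := child 0 isT Hc => /= HU.
  have HW' : liso W U by apply: liso_trans HW (lpar_unitr U).
  by case: H => [[<- [-> ->]]|[<- [-> ->]]]; apply: sem_iso HW' HU.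
- case=> d [Hd [Hca [Hdb [/eq_seq_msetP/perm2 Eqs [Et Et']]]]].
  rewrite Et Et' /=.
  case: Eqs => Eqs; subst qs;
  case: Us HsU HW child => [|U [|V [|? ?]]] // _ HW child.
    have := child 0 isT Hc => /= HU; have := child 1 isT Hd => /= HV.
    exists U, V; split; [by rewrite -Hca|by rewrite -Hdb|].
    by apply: liso_trans HW _; apply: lpar_congr (liso_refl _) (lpar_unitr V).
  have := child 0 isT Hd => /= HU; have := child 1 isT Hc => /= HV.
  exists V, U; split; [by rewrite -Hca|by rewrite -Hdb|].
  apply: liso_trans HW _; apply: liso_trans (lpar_comm U V).
  by apply: lpar_congr (liso_refl _) (lpar_unitr V).
- case=> Hca [/eq_seq_msetP/perm1 Eqs [Et Et']]; subst qs.
  case: Us HsU HW child => [|U [|? ?]] // _ HW child.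
  have := child 0 isT Hc => /= HU.
  rewrite Et Et' /=.
  exists 1, U, (lempty Sigma); split; [by rewrite -Hca|exact: liso_refl|].
  apply: liso_trans HW _; apply: liso_trans (lpar_unitr U) _.
  exact: liso_sym (lseq_unitr U).
Qed.

Lemma self_in x : List.In x (subterms x).
Proof. by case: x => *; left. Qed.

Lemma run_call (q c qf q' : Q) (X W : lpo) : gam q (seq_mset [:: c]) q' -> fin qf ->
  run A c X qf -> liso W X -> run A q W q'.
Proof.
move=> Hg Hf Hr HW.
apply: (@run_par _ _ A q q' [:: c] [:: qf] [:: X] W) => //.
- by move=> x; rewrite inE => /eqP ->.
- by move=> [|i].
- exact: liso_trans HW (liso_sym (lpar_unitr X)).
Qed.

Lemma run_call2 (q c d qf qf' q' : Q) (X Y W : lpo) : gam q (seq_mset [:: c; d]) q' ->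
  fin qf -> fin qf' -> run A c X qf -> run A d Y qf' -> liso W (lpar X Y) -> run A q W q'.
Proof.
move=> Hg Hf Hf' Hr Hr' HW.
apply: (@run_par _ _ A q q' [:: c; d] [:: qf; qf'] [:: X; Y] W) => //.
- by move=> x; rewrite !inE => /orP[/eqP ->|/eqP ->].
- by move=> [|[|i]].
- apply: liso_trans HW _; apply: lpar_congr (liso_refl _) (liso_sym (lpar_unitr Y)).
Qed.

Definition mk (q : Q) (k : 'I_3) : Q := (q.1, k).
Lemma ex_mk q k : ex (mk q k) = ex q. Proof. by []. Qed.
Definition o1 : 'I_3 := @Ordinal 3 1 isT.
Definition o2 : 'I_3 := @Ordinal 3 2 isT.

Lemma complete x : forall (U : lpo), sem x U ->
  forall q : Q, ex q = x -> tg q = 0 -> pa_lang A q U.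
Proof.
elim: x => [| |a|a IHa b IHb|a IHa b IHb|a IHa b IHb|a IHa] U /= HU q Ex Ht //.
- exists q; split; first by rewrite /= /fin Ex.
  exact: run_one.
- exists (mk q o2); split; first by rewrite /= /fin ex_mk Ex.
  by apply: (@run_atom _ _ A q a (mk q o2) U) => //.
- have [c [Hca Hc]] : exists c : Q, ex c = a /\ tg c = 0.
    apply: (ex_sub (q := q)); rewrite Ex /=; right; apply: List.in_or_app; left; exact: self_in.
  have [d [Hdb Hd]] : exists c : Q, ex c = b /\ tg c = 0.
    apply: (ex_sub (q := q)); rewrite Ex /=; right; apply: List.in_or_app; right; exact: self_in.
  exists (mk q o2); split; first by rewrite /= /fin ex_mk Ex.
  case: HU => HU.
    have [qf [Hf Hr]] := IHa U HU c Hca Hc.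
    apply: (run_call _ Hf Hr (liso_refl _)).
    split => //; exists c; split => //; rewrite Ex; split; [by left|by []].
  have [qf [Hf Hr]] := IHb U HU d Hdb Hd.
  apply: (run_call _ Hf Hr (liso_refl _)).
  split => //; exists d; split => //; rewrite Ex; split; [by right|by []].
- have [c [Hca Hc]] : exists c : Q, ex c = a /\ tg c = 0.
    apply: (ex_sub (q := q)); rewrite Ex /=; right; apply: List.in_or_app; left; exact: self_in.
  have [d [Hdb Hd]] : exists c : Q, ex c = b /\ tg c = 0.
    apply: (ex_sub (q := q)); rewrite Ex /=; right; apply: List.in_or_app; right; exact: self_in.
  case: HU => [U1 [V1 [H1 H2 H3]]].
  exists (mk q o2); split; first by rewrite /= /fin ex_mk Ex.
  have [qf [Hf Hr]] := IHa U1 H1 c Hca Hc.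
  have [qf' [Hf' Hr']] := IHb V1 H2 d Hdb Hd.
  apply: (@run_seq _ _ A q (mk q o1) (mk q o2) U1 V1 U _ _ H3).
    apply: (run_call _ Hf Hr (liso_refl _)).
    split => //; exists c; split => //; rewrite Ex; split => //; by left.
  apply: (run_call _ Hf' Hr' (liso_refl _)).
  split => //; exists d; split => //; rewrite ex_mk Ex; split => //; by right.
- have [c [Hca Hc]] : exists c : Q, ex c = a /\ tg c = 0.
    apply: (ex_sub (q := q)); rewrite Ex /=; right; apply: List.in_or_app; left; exact: self_in.
  have [d [Hdb Hd]] : exists c : Q, ex c = b /\ tg c = 0.
    apply: (ex_sub (q := q)); rewrite Ex /=; right; apply: List.in_or_app; right; exact: self_in.
  case: HU => [U1 [V1 [H1 H2 H3]]].
  exists (mk q o2); split; first by rewrite /= /fin ex_mk Ex.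
  have [qf [Hf Hr]] := IHa U1 H1 c Hca Hc.
  have [qf' [Hf' Hr']] := IHb V1 H2 d Hdb Hd.
  apply: (run_call2 _ Hf Hf' Hr Hr' H3).
  split => //; exists c; split => //; rewrite Ex; exists d; by [].
- have [c [Hca Hc]] : exists c : Q, ex c = a /\ tg c = 0.
    apply: (ex_sub (q := q)); rewrite Ex /=; right; exact: self_in.
  exists q; split; first by rewrite /= /fin Ex.
  case: HU => n; elim: n U => [|n IH] U /=.
    by move=> H; apply: run_one.
  case=> [X [Y [HX HY HW]]].
  apply: (@run_seq _ _ A q q q X Y U _ (IH Y HY) HW).
  have [qf [Hf Hr]] := IHa X HX c Hca Hc.
  apply: (run_call _ Hf Hr (liso_refl _)).
  split => //; exists c; split => //; rewrite Ex; by [].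
Qed.

Lemma in_seq_mset (x : Q) s : (x \in seq_mset s) = (x \in s).
Proof. by rewrite in_mset mset_seqE -has_count has_pred1. Qed.

Lemma child_lt (q r q'' : Q) phi : r \in phi -> gam q phi q'' -> esize (ex r) < esize (ex q).
Proof.
move=> Hr [_ [c [_]]]; case: (ex q) => //.
- move=> a b [Hca [E _]]; move: Hr; rewrite E in_seq_mset inE => /eqP ->.
  by case: Hca => ->; rewrite /= ltnS ?leq_addr ?leq_addl.
- move=> a b [E H]; move: Hr; rewrite E in_seq_mset inE => /eqP ->.
  by case: H => [[-> _]|[-> _]]; rewrite /= ltnS ?leq_addr ?leq_addl.
- move=> a b [d [_ [Hca [Hdb [E _]]]]]; move: Hr; rewrite E in_seq_mset !inE.
  by case/orP => /eqP ->; rewrite ?Hca ?Hdb /= ltnS ?leq_addr ?leq_addl.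
- move=> a [Hca [E _]]; move: Hr; rewrite E in_seq_mset inE => /eqP ->.
  by rewrite Hca.
Qed.

Lemma step_size (q' q : Q) : support_step A q' q -> esize (ex q') <= esize (ex q).
Proof.
case=> [[a [E _]]|[[phi [E _]]|[phi [Hr [q'' Hg]]]]].
- by rewrite (ex_eq E).
- by rewrite (ex_eq E).
- exact: ltnW (child_lt Hr Hg).
Qed.

Lemma fork_acyclic_A : fork_acyclic A.
Proof.
move=> q phi r Hr [q'' Hg] Hs.
have : esize (ex q) <= esize (ex r).
  elim: Hs => [x y /step_size //|x //|x y z _ H1 _ H2]; exact: leq_trans H1 H2.
by rewrite leqNgt (child_lt Hr Hg).
Qed.

Lemma N_gt0 : 0 < N.
Proof. by rewrite /N /sts; case: e. Qed.

Definition q0 : Q := (Ordinal N_gt0, ord0).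

Lemma ex_q0 : ex q0 = e.
Proof. by rewrite /ex /sts /=; case: e. Qed.

Lemma main (U : lpo) : pa_lang A q0 U <-> sem e U.
Proof.
split.
  case=> q' [Hf /sound [E H]].
  rewrite -ex_q0 -(ex_eq E); apply: final_sem => //.
  by rewrite (ex_eq E).
move=> H; exact: (complete H ex_q0).
Qed.

End Aut.

Theorem theorem7p16 (Sigma : finType) (e : srexpr Sigma) :
  exists (Q : finType) (A : pa Sigma Q) (q : Q),
    fork_acyclic A /\
    (forall U : lpo Sigma, is_lposet U -> (pa_lang A q U <-> sem e U)).
Proof.
exists (Q e), (A e), (q0 e); split; first exact: fork_acyclic_A.
by move=> U _; exact: main.
Qed.
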